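(* Let $V$ be a real vector space and $X$ a set of points lying on a line $\ell$ of $V$. The following are equivalent: (i) $Co(V,X)$ is topologically scattered (as a subspace of $\mathbf{2}^X$ with the product topology); (ii) $Co(V,X)$ is order-scattered; (iii) the semilattice of compact elements of $Co(V,X)$ is order-scattered; (iv) $X$ is order-scattered with respect to the linear order induced on $\ell$ (by identifying $\ell$ with the real line).
   Context: $Co(V,X)$ is the family of sets $C\cap X$ with $C$ convex in $V$, ordered by inclusion; its compact elements are the sets $\mathrm{conv}(F)\cap X$ with $F\subseteq X$ finite. A poset is order-scattered if it contains no copy of the chain $\mathbb{Q}$. A topological space is scattered if every non-empty subset has an isolated point in the induced topology; $\mathbf{2}^X\cong\mathcal{P}(X)$ carries the product topology of discrete two-point spaces. *)

(* Defs.v *)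
From HB Require Import structures.
From mathcomp Require Import all_boot all_order all_algebra.
From mathcomp Require Import boolp classical_sets cardinality reals.
Set Implicit Arguments. Unset Strict Implicit. Unset Printing Implicit Defensive.
Import Order.TTheory GRing.Theory Num.Theory.
Local Open Scope classical_set_scope.
Local Open Scope ring_scope.

Section Defs.
Variable R : realType.
Variable V : lmodType R.

Definition convex_in (C : set V) : Prop :=
  forall x y, C x -> C y -> forall t : R, 0 <= t -> t <= 1 ->
    C (t *: x + (1 - t) *: y).

Definition conv (F : set V) : set V :=
  [set x | forall C, convex_in C -> F `<=` C -> C x].

Definition Co (X : set V) : set (set V) :=
  [set S | exists C, convex_in C /\ S = C `&` X].

(* compact elements of Co(V,X): conv(F) ∩ X, F ⊆ X finite *)
Definition Co_compact (X : set V) : set (set V) :=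
  [set S | exists F, F `<=` X /\ finite_set F /\ S = conv F `&` X].

(* S is an isolated point of the family G, viewed as a subspace of 2^X
   with the product topology: some basic open set
   { T | A ⊆ T, B ∩ T = ∅ } (A ⊆ X, B ⊆ X finite) meets G only in S. *)
Definition isolated_point (X : set V) (G : set (set V)) (S : set V) : Prop :=
  G S /\ exists A B : set V,
    [/\ finite_set A, finite_set B, A `<=` X, B `<=` X &
    [/\ A `<=` S, B `&` S = set0 &
      forall T, G T -> A `<=` T -> B `&` T = set0 -> T = S]].

Definition top_scattered (X : set V) (F : set (set V)) : Prop :=
  forall G, G `<=` F -> G !=set0 -> exists S, isolated_point X G S.
End Defs.

Definition order_scattered (T : Type) (lt : T -> T -> Prop) (P : set T) : Prop :=
  ~ exists f : rat -> T, (forall q, P (f q)) /\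
      (forall q r : rat, q < r -> lt (f q) (f r)).

Definition proper_subset (T : Type) (A B : set T) : Prop :=
  A `<=` B /\ A <> B.

(* Main.v *)
Require Import Defs.
From HB Require Import structures.
From mathcomp Require Import all_boot all_order all_algebra.
From mathcomp Require Import boolp classical_sets cardinality reals.
Import Order.TTheory GRing.Theory Num.Theory.
Local Open Scope classical_set_scope.
Local Open Scope ring_scope.
From mathcomp Require Import ring lra.
Set Implicit Arguments.
Unset Strict Implicit.
Section Dense.
Variables (T : Type) (lt : T -> T -> Prop) (D : set T).
Hypothesis ltT : forall x y z, lt x y -> lt y z -> lt x z.
Hypothesis D0 : D !=set0.
Hypothesis Dlo : forall x, D x -> exists y, D y /\ lt y x.
Hypothesis Dhi : forall x, D x -> exists y, D y /\ lt x y.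
Hypothesis Ddense : forall x y, D x -> D y -> lt x y -> exists z, D z /\ lt x z /\ lt z y.

Let e : nat -> option rat := @pickle_inv rat.

Lemma e_inj i j q : e i = Some q -> e j = Some q -> i = j.
Proof.
move=> Ei Ej; have := @pickle_invK rat i; have := @pickle_invK rat j.
by rewrite /e in Ei Ej; rewrite Ei Ej /= => -> ->.
Qed.

Lemma argmax_nat (v : nat -> rat) (P : nat -> Prop) n :
  (exists i, (i < n)%N /\ P i) ->
  exists m, [/\ (m < n)%N, P m & forall i, (i < n)%N -> P i -> v i <= v m].
Proof.
elim: n => [[i [//]]|n IH [i [lti Pi]]].
have [Pn|nPn] := pselect (P n).
  have [Hex|Hnex] := pselect (exists i, (i < n)%N /\ P i).
    have [m [ltm Pm Hm]] := IH Hex.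
    have [vle|vlt] := leP (v m) (v n).
      exists n; split => // j; rewrite ltnS leq_eqVlt => /orP[/eqP->//|ltj Pj].
      exact: le_trans (Hm _ ltj Pj) vle.
    exists m; split => //; first by rewrite ltnS ltnW.
    move=> j; rewrite ltnS leq_eqVlt => /orP[/eqP->_|ltj Pj]; first exact: ltW.
    exact: Hm.
  exists n; split => // j; rewrite ltnS leq_eqVlt => /orP[/eqP->//|ltj Pj].
  by exfalso; apply: Hnex; exists j.
have [m [ltm Pm Hm]] : exists m, [/\ (m < n)%N, P m & forall i, (i < n)%N -> P i -> v i <= v m].
  apply: IH; exists i; split => //.
  by move: lti; rewrite ltnS leq_eqVlt => /orP[/eqP Ei|//]; subst.
exists m; split => //; first by rewrite ltnS ltnW.
move=> j; rewrite ltnS leq_eqVlt => /orP[/eqP->//|ltj Pj]; exact: Hm.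
Qed.

Definition Inv n (g : nat -> T) :=
  (forall i, (i < n)%N -> D (g i)) /\
  (forall i j q r, (i < n)%N -> (j < n)%N -> e i = Some q -> e j = Some r ->
     q < r -> lt (g i) (g j)).

Lemma step n g : Inv n g -> exists x, D x /\
  (forall i q r, (i < n)%N -> e i = Some q -> e n = Some r -> q < r -> lt (g i) x) /\
  (forall i q r, (i < n)%N -> e n = Some q -> e i = Some r -> q < r -> lt x (g i)).
Proof.
move=> [HD Hlt].
case En: (e n) => [r0|]; last first.
  by case: D0 => x Dx; exists x; split => //; split => i q r _ _ //.
pose Lo i := exists q, e i = Some q /\ q < r0.
pose Up i := exists q, e i = Some q /\ r0 < q.
pose v i := odflt 0 (e i).
have Hmax : (exists i, (i < n)%N /\ Lo i) -> exists m, [/\ (m < n)%N, Lo m &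
   forall i, (i < n)%N -> Lo i -> i = m \/ lt (g i) (g m)].
  move=> /(argmax_nat v) [m [ltm [qm [Em qmlt]] Hm]].
  exists m; split => //; first by exists qm.
  move=> i lti [qi [Ei qilt]].
  have := Hm i lti (ex_intro _ qi (conj Ei qilt)); rewrite /v Ei Em /= le_eqVlt.
  move=> /orP[/eqP Eq|qq]; first by left; apply: (e_inj Ei); rewrite Em Eq.
  by right; apply: (Hlt i m qi qm).
have Hmin : (exists i, (i < n)%N /\ Up i) -> exists m, [/\ (m < n)%N, Up m &
   forall i, (i < n)%N -> Up i -> i = m \/ lt (g m) (g i)].
  move=> /(argmax_nat (fun i => - v i)) [m [ltm [qm [Em qmlt]] Hm]].
  exists m; split => //; first by exists qm.
  move=> i lti [qi [Ei qilt]].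
  have := Hm i lti (ex_intro _ qi (conj Ei qilt)); rewrite /v Ei Em /= lerN2 le_eqVlt.
  move=> /orP[/eqP Eq|qq]; first by left; apply: (e_inj Ei); rewrite Em Eq.
  by right; apply: (Hlt m i qm qi).
have toLo i q r : e i = Some q -> Some r0 = Some r -> q < r -> Lo i.
  by move=> Ei [<-] qr; exists q.
have toUp i q r : Some r0 = Some q -> e i = Some r -> q < r -> Up i.
  by move=> [<-] Ei qr; exists r.
have [HL|HL] := pselect (exists i, (i < n)%N /\ Lo i);
have [HU|HU] := pselect (exists i, (i < n)%N /\ Up i).
- have [m [ltm [qm [Em qmlt]] Hm]] := Hmax HL.
  have [m' [ltm' [qm' [Em' qmlt']] Hm']] := Hmin HU.
  have [x [Dx [lx xl]]] : exists z, D z /\ lt (g m) z /\ lt z (g m').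
    apply: Ddense; [exact: HD|exact: HD|].
    by apply: (Hlt m m' qm qm') => //; apply: lt_trans qmlt'.
  exists x; split => //; split => i q r lti Ei En' qr.
    have [->//|] := Hm i lti (toLo _ _ _ Ei En' qr) => h; exact: ltT h lx.
  have [->//|] := Hm' i lti (toUp _ _ _ Ei En' qr) => h; exact: ltT xl h.
- have [m [ltm _ Hm]] := Hmax HL.
  have [x [Dx lx]] := Dhi (HD m ltm).
  exists x; split => //; split => i q r lti Ei En' qr.
    have [->//|] := Hm i lti (toLo _ _ _ Ei En' qr) => h; exact: ltT h lx.
  by exfalso; apply: HU; exists i; split => //; exact: toUp _ _ _ Ei En' qr.
- have [m' [ltm' _ Hm']] := Hmin HU.
  have [x [Dx xl]] := Dlo (HD m' ltm').
  exists x; split => //; split => i q r lti Ei En' qr.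
    by exfalso; apply: HL; exists i; split => //; exact: toLo _ _ _ Ei En' qr.
  have [->//|] := Hm' i lti (toUp _ _ _ Ei En' qr) => h; exact: ltT xl h.
- case: D0 => x Dx; exists x; split => //; split => i q r lti Ei En' qr.
    by exfalso; apply: HL; exists i; split => //; exact: toLo _ _ _ Ei En' qr.
  by exfalso; apply: HU; exists i; split => //; exact: toUp _ _ _ Ei En' qr.
Qed.

Definition ext n g (H : Inv n g) : nat -> T :=
  fun i => if i == n then sval (cid (step H)) else g i.

Lemma ext_inv n g (H : Inv n g) : Inv n.+1 (ext H).
Proof.
rewrite /ext; move: (svalP (cid (step H))); set x := sval _ => -[Dx [Hl Hu]].
have [HD Hlt] := H; split.
  move=> i; rewrite ltnS leq_eqVlt => /orP[/eqP->|lti]; first by rewrite eqxx.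
  by rewrite (ltn_eqF lti); apply: HD.
move=> i j q r; rewrite ltnS leq_eqVlt => /orP[/eqP Ei|lti];
  rewrite ltnS leq_eqVlt => /orP[/eqP Ej|ltj].
- by rewrite Ei Ej => -> [->]; rewrite ltxx.
- rewrite Ei eqxx (ltn_eqF ltj) => Ei' Ej' qr; exact: Hu Ei' Ej' qr.
- rewrite Ej eqxx (ltn_eqF lti) => Ei' Ej' qr; exact: Hl Ei' Ej' qr.
- by rewrite (ltn_eqF lti) (ltn_eqF ltj); apply: Hlt.
Qed.

Variable x0 : T.
Lemma inv0 : Inv 0 (fun _ => x0).
Proof. by split. Qed.

Fixpoint build (n : nat) : {g : nat -> T | Inv n g} :=
  match n with
  | 0 => exist _ (fun _ => x0) inv0
  | n'.+1 => exist _ (ext (proj2_sig (build n'))) (ext_inv (proj2_sig (build n')))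
  end.

Lemma build_coh n i : (i < n)%N -> sval (build n) i = sval (build i.+1) i.
Proof.
elim: n => [//|n IH]; rewrite ltnS leq_eqVlt => /orP[/eqP->//|lti].
by rewrite [in LHS]/= /ext (ltn_eqF lti) IH.
Qed.

Lemma dense_Q_aux : exists f : rat -> T, (forall q, D (f q)) /\
  (forall q r, q < r -> lt (f q) (f r)).
Proof.
exists (fun q => sval (build (pickle q).+1) (pickle q)); split.
  by move=> q; apply: (proj1 (proj2_sig (build (pickle q).+1))).
move=> q r qr.
set n := (maxn (pickle q) (pickle r)).+1.
have lq : (pickle q < n)%N by rewrite ltnS leq_maxl.
have lr : (pickle r < n)%N by rewrite ltnS leq_maxr.
rewrite -(build_coh lq) -(build_coh lr).
apply: (proj2 (proj2_sig (build n))) qr => //; exact: pickleK_inv.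
Qed.
End Dense.

Lemma dense_Q (T : Type) (lt : T -> T -> Prop) (D : set T) :
  (forall x y z, lt x y -> lt y z -> lt x z) -> D !=set0 ->
  (forall x, D x -> exists y, D y /\ lt y x) ->
  (forall x, D x -> exists y, D y /\ lt x y) ->
  (forall x y, D x -> D y -> lt x y -> exists z, D z /\ lt x z /\ lt z y) ->
  exists f : rat -> T, (forall q, D (f q)) /\ (forall q r, q < r -> lt (f q) (f r)).
Proof.
move=> tr D0 lo hi de; case: (D0) => x0 _.
exact: (dense_Q_aux tr D0 lo hi de x0).
Qed.
Unset Implicit Arguments.
Set Strict Implicit.
Section Split.
Variables (T : Type) (lt : T -> T -> Prop) (N : set (set T)).
Hypothesis ltT : forall x y z, lt x y -> lt y z -> lt x z.
Hypothesis ltI : forall x, ~ lt x x.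
Hypothesis N0 : N !=set0.
Hypothesis Hsplit : forall M, N M -> exists p M1 M2, [/\ N M1, N M2, M p,
  M1 `<=` M /\ M2 `<=` M & (forall y, M1 y -> lt y p) /\ (forall y, M2 y -> lt p y)].

Let SP M (t : T * set T * set T) := [/\ N t.1.2, N t.2, M t.1.1,
  t.1.2 `<=` M /\ t.2 `<=` M & (forall y, t.1.2 y -> lt y t.1.1) /\ (forall y, t.2 y -> lt t.1.1 y)].

Lemma Hch M : exists t, N M -> SP M t.
Proof.
have [NM|NM] := pselect (N M).
  have [p [M1 [M2 H]]] := Hsplit _ NM; by exists (p, M1, M2).
case: N0 => M0 NM0; have [p [M1 [M2 _]]] := Hsplit _ NM0.
by exists (p, M1, M2).
Qed.

Let sp M := sval (cid (Hch M)).
Let child (M : set T) (b : bool) := if b then (sp M).2 else (sp M).1.2.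
Let point M := (sp M).1.1.
Let M0 := sval (cid N0).
Let reg s := foldl child M0 s.
Let pt s := point (reg s).

Lemma spP M : N M -> SP M (sp M).
Proof. by move=> NM; apply: (svalP (cid (Hch M))). Qed.

Lemma childN M b : N M -> N (child M b) /\ child M b `<=` M.
Proof. by move=> /spP [? ? ? [? ?] _]; case: b. Qed.

Lemma foldN s M : N M -> N (foldl child M s).
Proof.
elim: s M => //= b s IH M NM; apply: IH; exact: (childN _ b NM).1.
Qed.

Lemma regN s : N (reg s).
Proof. apply: foldN; exact: (svalP (cid N0)). Qed.

Lemma reg_sub s u : reg (s ++ u) `<=` reg s.
Proof.
rewrite /reg foldl_cat; have := regN s; rewrite /reg.
move: (foldl child M0 s); elim: u => [|b u IH] M NM //=.
have [NC CM] := childN _ b NM; exact: subset_trans (IH _ NC) CM.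
Qed.

Lemma pt_in s : reg s (pt s).
Proof. by have [_ _ ? _ _] := spP _ (regN s). Qed.

Lemma pt_left s u : lt (pt (s ++ false :: u)) (pt s).
Proof.
have := reg_sub (rcons s false) u; rewrite cat_rcons => sub.
have := sub _ (pt_in (s ++ false :: u)).
rewrite /reg foldl_rcons -/(reg s).
by have [_ _ _ _ [H _]] := spP _ (regN s); apply: H.
Qed.

Lemma pt_right s u : lt (pt s) (pt (s ++ true :: u)).
Proof.
have := reg_sub (rcons s true) u; rewrite cat_rcons => sub.
have := sub _ (pt_in (s ++ true :: u)).
rewrite /reg foldl_rcons -/(reg s).
by have [_ _ _ _ [_ H]] := spP _ (regN s); apply: H.
Qed.

Lemma tri (s t : seq bool) : (exists u, t = s ++ u) \/ (exists u, s = t ++ u) \/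
  exists c b u1 u2, s = c ++ b :: u1 /\ t = c ++ ~~ b :: u2.
Proof.
elim: s t => [|b s IH] t; first by left; exists t.
case: t => [|b' t]; first by right; left; exists (b :: s).
have [[u ->]|[[u ->]|[c [b1 [u1 [u2 [-> ->]]]]]]] := IH t.
- have [<-|nb] := eqVneq b b'; first by left; exists u.
  right; right; exists [::], b, s, (s ++ u); split => //=.
  by move: nb; case: b; case: b'.
- have [<-|nb] := eqVneq b b'; first by right; left; exists u.
  right; right; exists [::], b, (t ++ u), t; split => //=.
  by move: nb; case: b; case: b'.
- have [<-|nb] := eqVneq b b'.
    by right; right; exists (b :: c), b1, u1, u2.
  right; right; exists [::], b, (c ++ b1 :: u1), (c ++ ~~ b1 :: u2); split => //=.
  by move: nb; case: b; case: b'.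
Qed.

Lemma asym x y : lt x y -> lt y x -> False.
Proof. by move=> h1 h2; apply: (ltI _ (ltT _ _ _ h1 h2)). Qed.

Lemma pt_dense s t : lt (pt s) (pt t) ->
  lt (pt (rcons s true)) (pt t) \/ lt (pt s) (pt (rcons t false)).
Proof.
move=> st; have [[u Et]|[[u Es]|[c [b [u1 [u2 [Es Et]]]]]]] := tri s t.
- case: u Et => [|b u] Et; first by rewrite Et cats0 in st; case: (ltI _ st).
  case: b Et => Et.
    by right; rewrite Et -cats1 -catA cat_cons; apply: pt_right.
  by exfalso; apply: (asym _ _ st); rewrite Et; apply: pt_left.
- case: u Es => [|b u] Es; first by rewrite Es cats0 in st; case: (ltI _ st).
  case: b Es => Es.
    by exfalso; apply: (asym _ _ st); rewrite Es; apply: pt_right.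
  by left; rewrite Es -cats1 -catA cat_cons; apply: pt_left.
- case: b Es Et => /= Es Et.
    by exfalso; apply: (asym _ _ st); rewrite Es Et; apply: (ltT _ _ _ (pt_left _ _) (pt_right _ _)).
  left; rewrite Es -cats1 -catA cat_cons.
  by apply: (ltT _ _ _ (pt_left _ _)); rewrite Et; apply: pt_right.
Qed.

Lemma split_Q : exists f : rat -> T, (forall q, exists M, N M /\ M (f q)) /\
  (forall q r, q < r -> lt (f q) (f r)).
Proof.
have H1 : range pt !=set0 by exists (pt [::]), [::].
have H2 : forall x, range pt x -> exists y, range pt y /\ lt y x.
  move=> _ [s _ <-]; exists (pt (rcons s false)); split; first by exists (rcons s false).
  by rewrite -cats1; apply: pt_left.
have H3 : forall x, range pt x -> exists y, range pt y /\ lt x y.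
  move=> _ [s _ <-]; exists (pt (rcons s true)); split; first by exists (rcons s true).
  by rewrite -cats1; apply: pt_right.
have H4 : forall x y, range pt x -> range pt y -> lt x y ->
    exists z, range pt z /\ lt x z /\ lt z y.
  move=> _ _ [s _ <-] [t _ <-] st; have [h|h] := pt_dense _ _ st.
    exists (pt (rcons s true)); split; first by exists (rcons s true).
    by split => //; rewrite -cats1; apply: pt_right.
  exists (pt (rcons t false)); split; first by exists (rcons t false).
  by split => //; rewrite -cats1; apply: pt_left.
have [f [Df Hf]] := dense_Q ltT H1 H2 H3 H4.
exists f; split => // q; have [s _ Es] := Df q.
by exists (reg s); split; [exact: regN|rewrite -Es; exact: pt_in].
Qed.
End Split.
Set Implicit Arguments.
Unset Strict Implicit.
Lemma notsub (T : Type) (A B : set T) : ~ (A `<=` B) -> exists x, A x /\ ~ B x.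
Proof.
move=> h; have [//|nex] := pselect (exists x, A x /\ ~ B x).
exfalso; apply: h => x Ax; have [//|nb] := pselect (B x).
by exfalso; apply: nex; exists x.
Qed.

Lemma set1I0 (T : Type) (b : T) (c : set T) : ~ c b -> [set b] `&` c = set0.
Proof.
move=> nb; apply/seteqP; split => x //=; move=> [E cb]; apply: nb; by rewrite -E.
Qed.

Lemma set1I0P (T : Type) (b : T) (c : set T) : [set b] `&` c = set0 -> ~ c b.
Proof. move=> E cb; have : ([set b] `&` c) b by []. by rewrite E. Qed.

Definition psub (T : Type) (c c' : set T) := c `<=` c' /\ c <> c'.

Lemma psub_wit (T : Type) (c c' : set T) : psub c c' -> exists y, c' y /\ ~ c y.
Proof.
move=> [sub ne]; apply: notsub => h; apply: ne; apply/seteqP; split => //.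
Qed.

Lemma psub_sub (T : Type) (a b c : set T) : psub a b -> b `<=` c -> psub a c.
Proof.
move=> [ab ne] bc; split; first exact: subset_trans bc.
by move=> E; subst; apply: ne; apply/seteqP; split.
Qed.

Lemma sub_psub (T : Type) (a b c : set T) : a `<=` b -> psub b c -> psub a c.
Proof.
move=> ab [bc ne]; split; first exact: subset_trans bc.
by move=> E; subst; apply: ne; apply/seteqP; split.
Qed.

Lemma psub_trans (T : Type) (a b c : set T) : psub a b -> psub b c -> psub a c.
Proof. by move=> ab [bc _]; apply: psub_sub bc. Qed.

Section Cut.
Variables (T : Type) (lt : T -> T -> Prop) (Y : set T) (H : set (set T)).
Hypothesis ltT : forall x y z, lt x y -> lt y z -> lt x z.
Hypothesis ltI : forall x, ~ lt x x.
Hypothesis ltTot : forall x y, Y x -> Y y -> x <> y -> lt x y \/ lt y x.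
Hypothesis H0 : H !=set0.
Hypothesis HY : forall c, H c -> c `<=` Y.
Hypothesis Hdown : forall c y z, H c -> c y -> Y z -> lt z y -> c z.
Hypothesis Hni : forall c, H c -> forall A B, finite_set A -> finite_set B ->
  A `<=` c -> B `<=` Y -> B `&` c = set0 ->
  exists c', [/\ H c', c' <> c, A `<=` c' & B `&` c' = set0].

Lemma chain c c' : H c -> H c' -> c `<=` c' \/ c' `<=` c.
Proof.
move=> Hc Hc'; have [h|h] := pselect (c `<=` c'); first by left.
have [h'|h'] := pselect (c' `<=` c); first by right.
have [y [cy ncy]] := notsub h; have [z [cz ncz]] := notsub h'.
exfalso; have yz : y <> z by move=> E; subst.
have [l|l] := ltTot (HY Hc cy) (HY Hc' cz) yz.
  by apply: ncy; apply: (Hdown Hc' cz (HY Hc cy) l).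
by apply: ncz; apply: (Hdown Hc cy (HY Hc' cz) l).
Qed.

Lemma compare c c' : H c -> H c' -> c <> c' -> psub c c' \/ psub c' c.
Proof.
move=> Hc Hc' ne; have [h|h] := chain Hc Hc'; [left|right]; split => //.
by move=> E; apply: ne.
Qed.

Lemma between u v w : H u -> H v -> H w -> psub u w -> psub w v ->
  exists w', [/\ H w', w' <> w, psub u w' & psub w' v].
Proof.
move=> Hu Hv Hw uw wv.
have [a [wa nua]] := psub_wit uw; have [b [vb nwb]] := psub_wit wv.
have s1 : [set a] `<=` w by move=> x /= ->.
have s2 : [set b] `<=` Y by move=> x /= ->; apply: (HY Hv).
have [w' [Hw' ne sA sB]] := Hni Hw (finite_set1 a) (finite_set1 b) s1 s2 (set1I0 nwb).
have w'a : w' a by apply: sA.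
have nw'b := set1I0P sB.
exists w'; split => //.
  have [//|h] : psub u w' \/ psub w' u.
    by apply: compare => // E; subst.
  by case: h => h _; exfalso; apply: nua; apply: h.
have [//|h] : psub w' v \/ psub v w'.
  by apply: compare => // E; subst.
by case: h => h _; exfalso; apply: nw'b; apply: h.
Qed.

Definition Node u v := [/\ H u, H v & exists w, [/\ H w, psub u w & psub w v]].

Lemma four u v : Node u v -> exists a b c d, [/\ H a, H b, H c, H d &
  [/\ psub u a, psub a b, psub b c, psub c d & psub d v]].
Proof.
move=> [Hu Hv [w [Hw uw wv]]].
have [x [y [Hx Hy [ux xy yv]]]] : exists x y, [/\ H x, H y & [/\ psub u x, psub x y & psub y v]].
  have [w' [Hw' ne uw' w'v]] := between Hu Hv Hw uw wv.
  have [h|h] := compare Hw Hw' (nesym ne).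
    by exists w, w'.
  by exists w', w.
have [x3 [y3 [z3 [Hx3 Hy3 Hz3 [ux3 xy3 yz3 zv3]]]]] : exists x y z, [/\ H x, H y, H z &
    [/\ psub u x, psub x y, psub y z & psub z v]].
  have [b [Hb ne ub by_]] := between Hu Hy Hx ux xy.
  have [h|h] := compare Hb Hx ne.
    by exists b, x, y.
  by exists x, b, y.
have [c [Hc ne yc cv]] := between Hy3 Hv Hz3 yz3 zv3.
have [h|h] := compare Hz3 Hc (nesym ne).
  by exists x3, y3, z3, c.
by exists x3, y3, c, z3.
Qed.

Lemma root : exists u v, Node u v.
Proof.
case: H0 => c Hc.
have [c' [Hc' ne _ _]] := Hni Hc (finite_set0 T) (finite_set0 T) (sub0set _) (sub0set _) (set0I _).
have [c1 [c2 [H1 H2 p12]]] : exists c1 c2, [/\ H c1, H c2 & psub c1 c2].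
  have [h|h] := compare Hc Hc' (nesym ne); [by exists c, c'|by exists c', c].
have [a [c2a nc1a]] := psub_wit p12.
have s1 : [set a] `<=` c2 by move=> x /= ->.
have [c3 [H3 ne3 sA _]] := Hni H2 (finite_set1 a) (finite_set0 T) s1 (sub0set _) (set0I _).
have c3a : c3 a by apply: sA.
have p13 : psub c1 c3.
  have [//|[h _]] := compare H1 H3 (fun E => ltac:(by subst)).
  by exfalso; apply: nc1a; apply: h.
have [h|h] := compare H2 H3 (nesym ne3).
  by exists c1, c3; split => //; exists c2.
by exists c1, c2; split => //; exists c3.
Qed.

Lemma cut_Q : exists f : rat -> T, (forall q, Y (f q)) /\
  (forall q r, q < r -> lt (f q) (f r)).
Proof.
pose NN := [set M | exists u v, Node u v /\ M = v `\` u].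
have N0 : NN !=set0 by have [u [v nd]] := root; exists (v `\` u), u, v.
have Hs : forall M, NN M -> exists p M1 M2, [/\ NN M1, NN M2, M p,
    M1 `<=` M /\ M2 `<=` M & (forall y, M1 y -> lt y p) /\ (forall y, M2 y -> lt p y)].
  move=> _ [u [v [nd ->]]]; have [Hu Hv _] := nd.
  have [a [b [c [d [Ha Hb Hc Hd [ua ab bc cd dv]]]]]] := four nd.
  have [p [cp nbp]] := psub_wit bc.
  have ub : u `<=` b by case: (psub_trans ua ab).
  have uc : u `<=` c by case: (psub_trans (psub_trans ua ab) bc).
  have bv : b `<=` v by case: (psub_trans (psub_trans bc cd) dv).
  have cv : c `<=` v by case: (psub_trans cd dv).
  exists p, (b `\` u), (v `\` c); split.
  - by exists u, b; split => //; split => //; exists a.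
  - by exists c, v; split => //; split => //; exists d.
  - by split; [apply: cv|move=> /ub].
  - by split => y [h1 h2]; split => //; [apply: bv|move=> /uc].
  - split => y [h1 h2].
      have ne : y <> p by move=> E; subst.
      have [//|l] := ltTot (HY Hb h1) (HY Hc cp) ne.
      by exfalso; apply: nbp; apply: (Hdown Hb h1 (HY Hc cp) l).
    have ne : p <> y by move=> E; subst.
    have [//|l] := ltTot (HY Hc cp) (HY Hv h1) ne.
    by exfalso; apply: h2; apply: (Hdown Hc cp (HY Hv h1) l).
have [f [Hf1 Hf2]] := @split_Q T lt NN ltT ltI N0 Hs.
exists f; split => // q; have [_ [[u [v [[_ Hv _] ->]]] [h _]]] := Hf1 q.
exact: HY Hv _ h.
Qed.
End Cut.
Unset Implicit Arguments.
Set Strict Implicit.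
Set Implicit Arguments.
Unset Strict Implicit.
Section Geo.
Variables (R : realType) (V : lmodType R) (a d : V) (X : set V).
Hypothesis dne : d != 0.
Hypothesis HX : X `<=` [set a + t *: d | t in [set: R]].

Definition pp (t : R) : V := a + t *: d.
Definition YY : set R := [set t | X (pp t)].

Lemma pp_inj s t : pp s = pp t -> s = t.
Proof.
rewrite /pp => /addrI /eqP; rewrite -subr_eq0 -scalerBl scaler_eq0 (negbTE dne) orbF.
by rewrite subr_eq0 => /eqP.
Qed.

Lemma XP x : X x -> exists t, x = pp t /\ YY t.
Proof. move=> Xx; have [t _ E] := HX Xx; exists t; split; first by rewrite /pp E.
by rewrite /YY /= /pp E.
Qed.

Lemma pp_comb l s t : l *: pp s + (1 - l) *: pp t = pp (l * s + (1 - l) * t).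
Proof.
rewrite /pp !scalerDr !scalerA addrACA -scalerDl [l + _]addrC subrK scale1r.
by rewrite scalerDl.
Qed.

Lemma conv_betw C s t u : convex_in C -> C (pp s) -> C (pp t) ->
  s <= u -> u <= t -> C (pp u).
Proof.
move=> cC Cs Ct su ut.
have [st|st] := eqVneq s t.
  move: ut; rewrite -st => us.
  by have -> : u = s by apply/eqP; rewrite eq_le us su.
have ts0 : t - s != 0 by rewrite subr_eq0 eq_sym.
have lst : s < t by rewrite lt_neqAle st (le_trans su ut).
pose l := (t - u) / (t - s).
have l0 : 0 <= l by apply: divr_ge0; lra.
have l1 : l <= 1 by rewrite /l ler_pdivrMr; lra.
have := cC _ _ Cs Ct l l0 l1; rewrite pp_comb.
suff -> : l * s + (1 - l) * t = u by [].
rewrite /l; field; exact: ts0.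
Qed.

Definition seg s t : set V := [set x | exists u, x = pp u /\ s <= u /\ u <= t].

Lemma seg_convex s t : convex_in (seg s t).
Proof.
move=> _ _ [u1 [-> [h1 h2]]] [u2 [-> [h3 h4]]] l l0 l1.
rewrite pp_comb; exists (l * u1 + (1 - l) * u2); split => //; split; nra.
Qed.

Lemma conv2P s t x : s <= t ->
  conv [set pp s; pp t] x <-> exists u, x = pp u /\ s <= u /\ u <= t.
Proof.
move=> st; split.
  move=> h; apply: (h (seg s t) (@seg_convex s t)).
  move=> y [->|->]; [exists s|exists t]; split => //; split => //.
move=> [u [-> [su ut]]] C cC FC.
apply: (conv_betw cC _ _ su ut); apply: FC; [left|right] => //.
Qed.

Lemma Co_betw S s t u : Co X S -> S (pp s) -> S (pp t) -> YY u ->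
  s <= u -> u <= t -> S (pp u).
Proof.
move=> [C [cC ->]] [Cs _] [Ct _] Yu su ut; split => //.
exact: conv_betw cC Cs Ct su ut.
Qed.

Lemma Co_sub S : Co X S -> S `<=` X.
Proof. by move=> [C [_ ->]] x []. Qed.

End Geo.
Unset Implicit Arguments.
Set Strict Implicit.
Set Implicit Arguments.
Unset Strict Implicit.

Definition Qemb (P : set rat) := exists h : rat -> rat,
  (forall q, P (h q)) /\ (forall q r, q < r -> h q < h r).

Lemma rat_ltT : forall x y z : rat, x < y -> y < z -> x < z.
Proof. move=> x y z; exact: lt_trans. Qed.

Lemma int_emb (x y : rat) : x < y -> Qemb [set z | x < z /\ z < y].
Proof.
move=> xy; apply: dense_Q rat_ltT _ _ _ _.
- by exists ((x + y) / 2); split; lra.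
- move=> z [h1 h2]; exists ((x + z) / 2); split; [split|]; lra.
- move=> z [h1 h2]; exists ((z + y) / 2); split; [split|]; lra.
- move=> u v [h1 h2] [h3 h4] h5; exists ((u + v) / 2); split; [split|split]; lra.
Qed.

Lemma pos_emb : Qemb [set z | 0 < z].
Proof.
apply: dense_Q rat_ltT _ _ _ _.
- by exists 1.
- move=> z /= h; exists (z / 2); split; rewrite /=; lra.
- move=> z /= h; exists (z + 1); split; rewrite /=; lra.
- move=> u v /= h1 h2 h5; exists ((u + v) / 2); split; [rewrite /=|split]; lra.
Qed.

Lemma pairs_emb : exists A B : rat -> rat, (forall q, 0 < A q /\ A q < B q) /\
  (forall q r, q < r -> B q < A r).
Proof.
pose D := [set p : rat * rat | 0 < p.1 /\ p.1 < p.2].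
pose lt2 (p p' : rat * rat) := p.2 < p'.1 /\ p'.1 < p'.2.
have T2 : forall x y z, lt2 x y -> lt2 y z -> lt2 x z.
  move=> [x1 x2] [y1 y2] [z1 z2]; rewrite /lt2 /= => [[h1 h2] [h3 h4]]; split; lra.
have H1 : D !=set0 by exists (1, 2); rewrite /D /=; split; lra.
have H2 : forall x, D x -> exists y, D y /\ lt2 y x.
  move=> [x1 x2] [/= h1 h2]; exists (x1 / 3, x1 / 2); rewrite /D /lt2 /=; split; split; lra.
have H3 : forall x, D x -> exists y, D y /\ lt2 x y.
  move=> [x1 x2] [/= h1 h2]; exists (x2 + 1, x2 + 2); rewrite /D /lt2 /=; split; split; lra.
have H4 : forall x y, D x -> D y -> lt2 x y -> exists z, D z /\ lt2 x z /\ lt2 z y.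
  move=> [x1 x2] [y1 y2] [/= h1 h2] [/= h3 h4] [/= h5 h6].
  exists (x2 + (y1 - x2) / 3, x2 + 2 * (y1 - x2) / 3); rewrite /D /lt2 /=.
  split; [split|split; split]; lra.
have [f [Df Hf]] := dense_Q T2 H1 H2 H3 H4.
by exists (fun q => (f q).1), (fun q => (f q).2); split => [q|q r /Hf []//]; apply: Df.
Qed.

Lemma coloring (A : set rat) : Qemb A \/ Qemb (~` A).
Proof.
have [dA|ndA] := pselect (forall x y : rat, x < y -> exists z, A z /\ x < z /\ z < y).
  left; apply: dense_Q rat_ltT _ _ _ _.
  - by have [z [Az _]] := dA 0 1 ltr01; exists z.
  - move=> z Az; have l1 : z - 1 < z by lra.
    have [w [Aw [h1 h2]]] := dA (z - 1) z l1; by exists w.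
  - move=> z Az; have l1 : z < z + 1 by lra.
    have [w [Aw [h1 h2]]] := dA z (z + 1) l1; by exists w.
  - move=> u v _ _ uv; have [w [Aw [h1 h2]]] := dA u v uv; by exists w.
right.
have [x [y [xy nA]]] : exists x y : rat, x < y /\ forall z, x < z -> z < y -> ~ A z.
  apply: contra_notP ndA => h x y xy.
  have [//|ne] := pselect (exists z, A z /\ x < z /\ z < y).
  exfalso; apply: h; exists x, y; split => // z h1 h2 Az; apply: ne; by exists z.
case: (@int_emb x y xy) => h [Hh1 Hh2]; rewrite /Qemb; exists h; split => // q.
by have [h1 h2] := Hh1 q; apply: nA.
Qed.
Set Implicit Arguments.
Unset Strict Implicit.

Lemma conv_sub (R : realType) (V : lmodType R) (F : set V) : F `<=` conv F.
Proof. by move=> x Fx C cC FC; apply: FC. Qed.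

Lemma conv_convex (R : realType) (V : lmodType R) (F : set V) : convex_in (conv F).
Proof.
move=> x y cx cy l l0 l1 C cC FC.
exact: cC _ _ (cx C cC FC) (cy C cC FC) l l0 l1.
Qed.

Lemma compact_Co (R : realType) (V : lmodType R) (X S : set V) :
  Co_compact X S -> Co X S.
Proof. by move=> [F [_ [_ ->]]]; exists (conv F); split => //; apply: conv_convex. Qed.

Section Main.
Variables (R : realType) (V : lmodType R) (a d : V) (X : set V).
Hypothesis dne : d != 0.
Hypothesis HX : X `<=` [set a + t *: d | t in [set: R]].
Local Notation p := (pp a d).
Local Notation Y := (YY a d X).

Definition Qin := exists f : rat -> R, (forall q, Y (f q)) /\
  (forall q r, q < r -> f q < f r).

Lemma dirE : Qin -> exists g : rat -> set V, (forall q, Co_compact X (g q)) /\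
  (forall q r, q < r -> proper_subset (g q) (g r)).
Proof.
move=> [f [Yf mf]]; case: pos_emb => e [e0 me].
pose b := f 0; pose g q := f (e q).
have bg q : b < g q by apply: mf; apply: e0.
exists (fun q => conv [set p b; p (g q)] `&` X); split.
  move=> q; exists [set p b; p (g q)]; split; last by split => //; apply: finite_set2.
  by move=> x [->|->]; apply: Yf.
move=> q r qr; have gqr : g q < g r by apply: mf; apply: me.
split.
  move=> x [cx Xx]; split => //.
  have [u [xu [h1 h2]]] := (conv2P a d x (ltW (bg q))).1 cx.
  apply/(conv2P a d x (ltW (bg r))); exists u; split => //; split => //.
  exact: le_trans (ltW gqr).
move=> E.
have : (conv [set p b; p (g r)] `&` X) (p (g r)).
  by split; [apply: conv_sub; right|apply: Yf].
rewrite -E => -[cx _].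
have [u [xu [h1 h2]]] := (conv2P a d _ (ltW (bg q))).1 cx.
have := pp_inj dne xu => eu; rewrite eu in gqr.
by move: (lt_le_trans gqr h2); rewrite ltxx.
Qed.

Lemma dirD (f : rat -> set V) : (forall q, Co X (f q)) ->
  (forall q r, q < r -> proper_subset (f q) (f r)) -> Qin.
Proof.
move=> Cf mf.
pose P q := [set t | f q (p t)].
have PY q t : P q t -> Y t by move=> h; apply: (Co_sub (Cf q) h).
have Psub q r : q <= r -> P q `<=` P r.
  rewrite le_eqVlt => /orP[/eqP->//|/mf [h _]] t; exact: h.
have Pnew q r : q < r -> exists t, P r t /\ ~ P q t.
  move=> /mf [sub ne]; have [x [frx nfqx]] : exists x, f r x /\ ~ f q x.
    apply: notsub => h; apply: ne; apply/seteqP; split => //.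
  have [t [xt _]] := XP HX (Co_sub (Cf r) frx).
  by exists t; rewrite /P /= -xt.
have Pconv q s t u : P q s -> P q t -> Y u -> s <= u -> u <= t -> P q u.
  by move=> h1 h2 Yu su ut; apply: (Co_betw (Cf q) h1 h2 Yu su ut).
have [t0 [Pt0 _]] := Pnew (-1) 0 (ltrN10 _).
have [A [B [AB BA]]] := pairs_emb.
have wex q : exists t, P (B q) t /\ ~ P (A q) t.
  by apply: Pnew; case: (AB q).
pose w q := sval (cid (wex q)).
have wP q : P (B q) (w q) /\ ~ P (A q) (w q) := svalP (cid (wex q)).
have t0A q : P (A q) t0 by apply: Psub Pt0; apply: ltW; case: (AB q).
have key q r : q < r -> [/\ P (A r) (w q), ~ P (A r) (w r) & P (A r) t0].
  move=> qr; split; [|exact: (wP r).2|exact: t0A].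
  apply: (Psub (B q)); [exact: ltW (BA _ _ qr)|exact: (wP q).1].
have wne q : w q <> t0 by move=> E; apply: (wP q).2; rewrite E.
have [[h [Ah mh]]|[h [Ah mh]]] := coloring [set q | t0 < w q].
  exists (fun q => w (h q)); split => [q|q r qr]; first by have [] := wP (h q); move/PY.
  have hqr := mh _ _ qr; have [k1 k2 k3] := key _ _ hqr.
  have [//|le] := ltP (w (h q)) (w (h r)); exfalso; apply: k2.
  exact: (Pconv _ _ _ _ k3 k1 (PY _ _ (wP (h r)).1) (ltW (Ah r)) le).
exists (fun q => w (h (- q))); split => [q|q r qr]; first by have [] := wP (h (- q)); move/PY.
have hqr : h (- r) < h (- q) by apply: mh; rewrite ltrN2.
have [k1 k2 k3] := key _ _ hqr.
have lt0 i : w (h i) < t0.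
  have := Ah i; rewrite /= => nlt; rewrite lt_neqAle; apply/andP; split.
    by apply/eqP; apply: wne.
  by rewrite leNgt; apply/negP.
have [le|//] := leP (w (h (- r))) (w (h (- q))).
exfalso; apply: k2.
- rewrite le_eqVlt in le; case/orP: le => [/eqP E|lt].
    by rewrite -E.
  exact: (Pconv _ _ _ _ k1 k3 (PY _ _ (wP (h (- q))).1) (ltW lt) (ltW (lt0 _))).
Qed.
End Main.
Set Implicit Arguments.
Unset Strict Implicit.

Lemma disP (T : Type) (B C : set T) x : B `&` C = set0 -> B x -> ~ C x.
Proof. by move=> E Bx Cx; have : (B `&` C) x by []; rewrite E. Qed.

Lemma disI (T : Type) (B C : set T) : (forall x, B x -> ~ C x) -> B `&` C = set0.
Proof. by move=> h; apply/seteqP; split => x // [Bx Cx]; apply: (h x Bx). Qed.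

Section Main2.
Variables (R : realType) (V : lmodType R) (a d : V) (X : set V).
Hypothesis dne : d != 0.
Hypothesis HX : X `<=` [set a + t *: d | t in [set: R]].
Local Notation p := (pp a d).
Local Notation Y := (YY a d X).

Lemma dirA : Qin a d X -> ~ top_scattered X (Co X).
Proof.
move=> [f [Yf mf]] top.
have fle s s' : s <= s' -> f s <= f s'.
  by rewrite le_eqVlt => /orP[/eqP->//|/mf/ltW].
pose C q := [set x | exists t, x = p t /\ exists s, s < q /\ t <= f s].
pose S q := C q `&` X.
have Cconv q : convex_in (C q).
  move=> _ _ [t1 [-> [s1 [h1 h2]]]] [t2 [-> [s2 [h3 h4]]]] l l0 l1.
  rewrite pp_comb; exists (l * t1 + (1 - l) * t2); split => //.
  have [s12|s12] := leP s1 s2.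
    by exists s2; split => //; have := fle _ _ s12; nra.
  by exists s1; split => //; have := fle _ _ (ltW s12); nra.
have Smono q r : q <= r -> S q `<=` S r.
  move=> qr x [[t [xt [s [sq ts]]]] Xx]; split => //; exists t; split => //.
  by exists s; split => //; exact: lt_le_trans sq qr.
have fin : forall A, finite_set A -> forall q, A `<=` S q -> exists r, r < q /\ A `<=` S r.
  move=> A /finite_seqP [s ->] q; elim: s => [|x s IH] sub.
    by exists (q - 1); split; [lra|move=> x].
  have [r [rq sr]] : exists r, r < q /\ [set` s] `<=` S r.
    by apply: IH => y ys; apply: sub; rewrite /= inE ys orbT.
  have [[t [xt [s0 [s0q ts0]]]] Xx] : S q x by apply: sub; rewrite /= inE eqxx.
  pose m := (s0 + q) / 2.
  have xm : S m x by split => //; exists t; split => //; exists s0; split => //; rewrite /m; lra.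
  have [rm|rm] := leP r m.
    exists m; split; first by rewrite /m; lra.
    move=> y; rewrite /= inE => /orP[/eqP->//|ys]; exact: Smono rm _ (sr _ ys).
  exists r; split => //.
  move=> y; rewrite /= inE => /orP[/eqP->|ys]; last exact: sr.
  exact: Smono (ltW rm) _ xm.
pose G := [set T | exists q, T = S q].
have GC : G `<=` Co X by move=> _ [q ->]; exists (C q); split.
have G0 : G !=set0 by exists (S 0), 0.
have [_ [[q ->] [A [B [fA fB AX BX [AS BS iso]]]]]] := top G GC G0.
have [r [rq Ar]] := fin A fA q AS.
have BSr : B `&` S r = set0.
  by apply: disI => x Bx Srx; apply: (disP BS Bx); apply: Smono (ltW rq) _ Srx.
have E := iso (S r) (ex_intro _ r erefl) Ar BSr.
pose m := (r + q) / 2.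
have : S q (p (f m)).
  split; last exact: Yf.
  by exists (f m); split => //; exists m; split => //; rewrite /m; lra.
rewrite -E => -[[t [pt [s [sr ts]]]] _].
have tf := pp_inj dne pt; rewrite -tf in ts.
have : f s < f m by apply: mf; rewrite /m; lra.
by rewrite ltNge ts.
Qed.

Lemma dirB : ~ top_scattered X (Co X) -> Qin a d X.
Proof.
move=> ntop.
have [G [GC [S0 GS0] NI]] : exists G, [/\ G `<=` Co X, G !=set0 &
   forall S, G S -> forall A B, finite_set A -> finite_set B -> A `<=` X -> B `<=` X ->
   A `<=` S -> B `&` S = set0 -> exists T, [/\ G T, A `<=` T, B `&` T = set0 & T <> S]].
  apply: contra_notP ntop => h G GC G0.
  have [//|niso] := pselect (exists S, isolated_point X G S).
  exfalso; apply: h; exists G; split => // S GS A B fA fB AX BX AS BS.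
  have [//|nT] := pselect (exists T, [/\ G T, A `<=` T, B `&` T = set0 & T <> S]).
  exfalso; apply: niso; exists S; split => //; exists A, B; split => //; split => // T GT AT BT.
  have [//|ne] := pselect (T = S).
  by exfalso; apply: nT; exists T.
have [x0 [S1 [GS1 S1x0]]] : exists x0 S1, G S1 /\ S1 x0.
  have [[y Sy]|nS0] := pselect (exists y, S0 y); first by exists y, S0.
  have [T0 [GT0 _ _ ne]] := NI S0 GS0 set0 set0 (finite_set0 _) (finite_set0 _)
    (sub0set _) (sub0set _) (sub0set _) (set0I _).
  have [[y Ty]|nT0] := pselect (exists y, T0 y); first by exists y, T0.
  exfalso; apply: ne; apply/seteqP; split => y h.
    by exfalso; apply: nT0; exists y.
  by exfalso; apply: nS0; exists y.
have [t0 [x0t0 Yt0]] := XP HX (Co_sub (GC _ GS1) S1x0).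
pose G0 T := G T /\ T (p t0).
pose side (b : bool) t := if b then t < t0 else t0 < t.
pose cutb (b : bool) (T : set V) := [set t | Y t /\ side b t /\ ~ T (p t)].
pose ltb (b : bool) (x y : R) := if b then x < y else y < x.
have ltbT b x y z : ltb b x y -> ltb b y z -> ltb b x z.
  by case: b => /= h1 h2; [exact: lt_trans h1 h2|exact: lt_trans h2 h1].
have ltbI b x : ~ ltb b x x by case: b => /=; rewrite ltxx.
have ltbTot b x y : x <> y -> ltb b x y \/ ltb b y x.
  by move=> ne; case: b => /=; have [xy|yx|xy] := ltgtP x y; by [left|right|].
have downb b T y z : G0 T -> cutb b T y -> Y z -> ltb b z y -> cutb b T z.
  move=> [GT Tt0] [Yy [sy ny]] Yz lzy; split => //.
  case: b sy lzy => /= sy lzy; split.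
  + exact: lt_trans lzy sy.
  + move=> Tz; apply: ny.
    exact: (Co_betw (GC _ GT) Tz Tt0 Yy (ltW lzy) (ltW sy)).
  + exact: lt_trans sy lzy.
  + move=> Tz; apply: ny.
    exact: (Co_betw (GC _ GT) Tt0 Tz Yy (ltW sy) (ltW lzy)).
have GenCut : forall b A0 B0, finite_set A0 -> finite_set B0 -> A0 `<=` X -> B0 `<=` X ->
   (exists T, [/\ G0 T, A0 `<=` T & B0 `&` T = set0]) ->
   (forall T, G0 T -> A0 `<=` T -> B0 `&` T = set0 ->
     forall A B, finite_set A -> finite_set B -> A `<=` X -> B `<=` X ->
     A `<=` T -> B `&` T = set0 ->
     exists T', [/\ G0 T', A0 `<=` T', B0 `&` T' = set0 &
       [/\ A `<=` T', B `&` T' = set0 & cutb b T' <> cutb b T]]) ->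
   exists f : rat -> R, (forall q, Y (f q)) /\ (forall q r, q < r -> ltb b (f q) (f r)).
  move=> b A0 B0 fA0 fB0 A0X B0X [S [GS A0S B0S]] Diff.
  pose H := [set c | exists T, [/\ G0 T, A0 `<=` T, B0 `&` T = set0 & c = cutb b T]].
  apply: (@cut_Q R (ltb b) Y H).
  - exact: ltbT.
  - exact: ltbI.
  - by move=> x y _ _; apply: ltbTot.
  - by exists (cutb b S), S.
  - by move=> _ [T [_ _ _ ->]] t [].
  - by move=> _ y z [T [G0T _ _ ->]]; apply: downb.
  - move=> _ [T [[GT Tt0] A0T B0T ->]] A' B' fA' fB' A'c B'Y B'c.
    pose Aa := A0 `|` [set p t0] `|` p @` (B' `&` side b).
    pose Bb := B0 `|` p @` A'.
    have fAa : finite_set Aa.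
      rewrite /Aa !finite_setU; split; [split => //; exact: finite_set1|].
      by apply: finite_image; apply: finite_setIl.
    have fBb : finite_set Bb by rewrite /Bb finite_setU; split => //; apply: finite_image.
    have AaX : Aa `<=` X.
      move=> x [[h|->]|[t [B't _] <-]]; [exact: A0X| exact: Yt0|exact: B'Y].
    have BbX : Bb `<=` X.
      by move=> x [h|[t A't <-]]; [exact: B0X|have [] := A'c _ A't].
    have AaT : Aa `<=` T.
      move=> x [[h|->]|[t [B't st] <-]]; [exact: A0T|exact: Tt0|].
      have [//|nT] := pselect (T (p t)).
      by exfalso; apply: (disP B'c B't); split; [exact: B'Y|split].
    have BbT : Bb `&` T = set0.
      apply: disI => x [h|[t A't <-]]; first exact: disP B0T h.
      by have [_ []] := A'c _ A't.
    have [T' [G0T' A0T' B0T' [AaT' BbT' ne]]] :=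
      Diff T (conj GT Tt0) A0T B0T Aa Bb fAa fBb AaX BbX AaT BbT.
    exists (cutb b T'); split.
    + by exists T'.
    + exact: ne.
    + move=> t A't; have [Yt [st _]] := A'c _ A't; split => //; split => //.
      by apply: (disP BbT'); right; exists t.
    + apply: disI => t B't [Yt [st nT']]; apply: nT'; apply: AaT'.
      by right; exists t.
have cuts_eq T T' : G0 T -> G0 T' -> cutb true T = cutb true T' ->
    cutb false T = cutb false T' -> T = T'.
  move=> [GT Tt0] [GT' T't0] E1 E2.
  have key (U U' : set V) : G0 U -> G0 U' -> cutb true U = cutb true U' ->
      cutb false U = cutb false U' -> U `<=` U'.
    move=> [GU Ut0] [GU' U't0] F1 F2 x Ux.
    have [t [xt Yt]] := XP HX (Co_sub (GC _ GU) Ux); rewrite xt in Ux *.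
    have [//|nU'] := pselect (U' (p t)); exfalso.
    have [lt1|lt1|et] := ltgtP t t0.
    - have : cutb true U' t by split => //; split.
      by rewrite -F1 => -[_ [_]].
    - have : cutb false U' t by split => //; split.
      by rewrite -F2 => -[_ [_]].
    - by apply: nU'; rewrite et.
  apply/seteqP; split; first exact: key.
  by apply: key => //.
have conv_res : forall b, (exists f : rat -> R, (forall q, Y (f q)) /\
    (forall q r, q < r -> ltb b (f q) (f r))) -> Qin a d X.
  case=> -[f [Yf mf]]; first by exists f.
  exists (fun q => f (- q)); split => // q r qr; apply: mf; by rewrite ltrN2.
have [[S [A [B [[GS St0] [fA fB] [AX BX] [AS BS Heq]]]]]|nI] := pselect (exists S A B,
   [/\ G0 S, finite_set A /\ finite_set B, A `<=` X /\ B `<=` X &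
    [/\ A `<=` S, B `&` S = set0 &
     forall T, G0 T -> A `<=` T -> B `&` T = set0 -> cutb true T = cutb true S]]).
  apply: (conv_res false); apply: (GenCut false A B) => //; first by exists S.
  move=> T [GT Tt0] AT BT A' B' fA' fB' A'X B'X A'T B'T.
  have [T' [GT' AT' BT' ne]] := NI T GT (A' `|` A `|` [set p t0]) (B' `|` B)
    ltac:(rewrite !finite_setU; split; [split => //|exact: finite_set1])
    ltac:(rewrite finite_setU; split => //)
    ltac:(by move=> x [[h|h]|->]; [exact: A'X|exact: AX|exact: Yt0])
    ltac:(by move=> x [h|h]; [exact: B'X|exact: BX])
    ltac:(by move=> x [[h|h]|->]; [exact: A'T|exact: AT|exact: Tt0])
    ltac:(by apply: disI => x [h|h]; [exact: disP B'T h|exact: disP BT h]).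
  have T't0 : T' (p t0) by apply: AT'; right.
  have AT'' : A `<=` T' by move=> x h; apply: AT'; left; right.
  have BT'' : B `&` T' = set0 by apply: disI => x h; apply: (disP BT'); right.
  exists T'; split => //; split.
  - by move=> x h; apply: AT'; left; left.
  - by apply: disI => x h; apply: (disP BT'); left.
  - move=> E; apply: ne; apply: cuts_eq => //.
    by rewrite (Heq T' (conj GT' T't0) AT'' BT'') (Heq T (conj GT Tt0) AT BT).
apply: (conv_res true); apply: (GenCut true [set p t0] set0).
- exact: finite_set1.
- exact: finite_set0.
- by move=> x ->.
- exact: sub0set.
- by exists S1; split => //; [split => //; rewrite -x0t0|move=> x ->; rewrite -x0t0|exact: set0I].
move=> T [GT Tt0] _ _ A' B' fA' fB' A'X B'X A'T B'T.
have [//|nex] := pselect (exists T', [/\ G0 T', [set p t0] `<=` T', set0 `&` T' = set0 &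
   [/\ A' `<=` T', B' `&` T' = set0 & cutb true T' <> cutb true T]]).
exfalso; apply: nI; exists T, (A' `|` [set p t0]), B'; split => //.
- by rewrite finite_setU; split => //; split => //; exact: finite_set1.
- by split => // x [h|->]; [exact: A'X|exact: Yt0].
split => //; first by move=> x [h|->]; [exact: A'T|].
move=> T'' [GT'' T''t0] AT'' BT''.
have [//|ne] := pselect (cutb true T'' = cutb true T).
exfalso; apply: nex; exists T''; split => //.
- by move=> x ->.
- exact: set0I.
split => //; by move=> x h; apply: AT''; left.
Qed.
End Main2.
Theorem proposition5p5 (R : realType) (V : lmodType R) (a d : V) (X : set V) :
  d != 0 ->
  X `<=` [set a + t *: d | t in [set: R]] ->
  let iv := order_scattered (fun s t : R => s < t) [set t : R | X (a + t *: d)] in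
  [/\ top_scattered X (Co X) <-> iv,
      order_scattered (@proper_subset V) (Co X) <-> iv &
      order_scattered (@proper_subset V) (Co_compact X) <-> iv].
Proof.
move=> dne HX iv.
have ivE : iv = ~ Qin a d X by [].
rewrite ivE; clear ivE.
split; split.
- by move=> top hq; exact: (dirA dne hq top).
- by move=> nq; apply: contra_notP nq; exact: (dirB HX).
- move=> os hq; apply: os; have [g [Cg mg]] := dirE dne hq.
  by exists g; split => // q; apply: compact_Co.
- by move=> nq [f [Cf mf]]; apply: nq; exact: (dirD HX Cf mf).
- by move=> os hq; apply: os; exact: (dirE dne hq).
- move=> nq [f [Cf mf]]; apply: nq.
  exact: (dirD HX (fun q => compact_Co (Cf q)) mf).
Qed.
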